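(* Consider any trajectory of the hybrid devil-stick model below, and suppose that for some $k$, $D\rho_k=0$ and $D\rho_{k+1}=0$. Then $$S_m\,\omega_{k+1}-S_p\,\omega_k=-K\sin\theta_k\left[\frac{1}{\omega_k}+\frac{1}{\omega_{k+1}}\right],$$ where $K=\frac{g(\Delta\theta^* )^2}{4R\sin(\Delta\theta^*/2)}$, $S_m=\sin(\phi-\Delta\theta^*/2)$, $S_p=\sin(\phi+\Delta\theta^*/2)$. In particular, if $\phi=\pi/2$ (resp. $\phi=-\pi/2$) this becomes $\omega_{k+1}-\omega_k=P\sin\theta_k\left[\frac1{\omega_k}+\frac1{\omega_{k+1}}\right]$ with $P=-\frac{g(\Delta\theta^* )^2}{2R\sin\Delta\theta^*}$ (resp. $P=\frac{g(\Delta\theta^* )^2}{2R\sin\Delta\theta^*}$).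
   Context: Constants: $m,J,g,R>0$, $\Delta\theta^*\in(0,\pi)$, $\phi\in(-\pi,\pi]$. The hybrid model consists of sequences $h(k),v(k)\in\mathbb{R}^2$, $\theta_k\in\mathbb{R}$, $\omega_k>0$, inputs $I_k,r_k\in\mathbb{R}$ and $\delta_k>0$ satisfying, for all $k\ge1$: $h(k+1)=h(k)+v(k)\delta_k+\begin{bmatrix}-\sin\theta_k\\ \cos\theta_k\end{bmatrix}\frac{I_k\delta_k}{m}+\begin{bmatrix}0\\-\tfrac12 g\delta_k^2\end{bmatrix}$, $v(k+1)=v(k)+\begin{bmatrix}-\sin\theta_k\\ \cos\theta_k\end{bmatrix}\frac{I_k}{m}+\begin{bmatrix}0\\-g\delta_k\end{bmatrix}$, $\theta_{k+1}=\theta_k+\Delta\theta^*$, $\omega_{k+1}=\omega_k+\frac{I_kr_k}{J}$, $\delta_k=\Delta\theta^*/\omega_{k+1}$. Define $\Phi(\theta)=\begin{bmatrix}R\cos(\theta-\phi)\\ R\sin(\theta-\phi)\end{bmatrix}$, $\Psi(\theta,\omega)=\frac{\omega}{\Delta\theta^*}[\Phi(\theta)-\Phi(\theta-\Delta\theta^* )]-\begin{bmatrix}0\\ \frac{g\Delta\theta^*}{2\omega}\end{bmatrix}$, $\rho_k=h(k)-\Phi(\theta_k)$ and $D\rho_k=v(k)-\Psi(\theta_k,\omega_k)$. *)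

(* Defs.v *)
From Stdlib Require Import Reals Lra.
Open Scope R_scope.

Definition Phi (Rr phi th : R) : R * R :=
  (Rr * cos (th - phi), Rr * sin (th - phi)).

Definition Psi (Rr phi g dth th om : R) : R * R :=
  (om / dth * (fst (Phi Rr phi th) - fst (Phi Rr phi (th - dth))),
   om / dth * (snd (Phi Rr phi th) - snd (Phi Rr phi (th - dth))) - g * dth / (2 * om)).

Definition rho (Rr phi : R) (h : nat -> R * R) (theta : nat -> R) (k : nat) : R * R :=
  (fst (h k) - fst (Phi Rr phi (theta k)), snd (h k) - snd (Phi Rr phi (theta k))).

Definition Drho (Rr phi g dth : R) (v : nat -> R * R) (theta omega : nat -> R) (k : nat)
  : R * R :=
  (fst (v k) - fst (Psi Rr phi g dth (theta k) (omega k)),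
   snd (v k) - snd (Psi Rr phi g dth (theta k) (omega k))).

Definition hybrid_trajectory (m J g Rr dth : R)
  (h v : nat -> R * R) (theta omega I r delta : nat -> R) : Prop :=
  forall k : nat, (1 <= k)%nat ->
    0 < omega k /\ 0 < delta k /\
    h (S k) = (fst (h k) + fst (v k) * delta k + (- sin (theta k)) * (I k * delta k / m),
               snd (h k) + snd (v k) * delta k + cos (theta k) * (I k * delta k / m)
                 - / 2 * g * (delta k) ^ 2) /\
    v (S k) = (fst (v k) + (- sin (theta k)) * (I k / m),
               snd (v k) + cos (theta k) * (I k / m) - g * delta k) /\
    theta (S k) = theta k + dth /\
    omega (S k) = omega k + I k * r k / J /\
    delta k = dth / omega (S k).

(* Main.v *)
Require Import Defs.
From Stdlib Require Import Reals Lra Lia.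
Open Scope R_scope.

Lemma trigL (th phi dth : R) :
  cos th * (cos (th - phi) - cos (th - dth - phi)) + sin th * (sin (th - phi) - sin (th - dth - phi))
  = 2 * sin (dth/2) * sin (phi + dth/2).
Proof.
  replace (cos th * (cos (th - phi) - cos (th - dth - phi)) + sin th * (sin (th - phi) - sin (th - dth - phi)))
   with (cos (th - (th - phi)) - cos (th - (th - dth - phi))) by (rewrite !cos_minus; ring).
  replace (th - (th - phi)) with ((phi + dth/2) - dth/2) by field.
  replace (th - (th - dth - phi)) with ((phi + dth/2) + dth/2) by field.
  rewrite (cos_minus (phi + dth/2) (dth/2)), (cos_plus (phi + dth/2) (dth/2)); ring.
Qed.

Lemma trigL2 (th phi dth : R) :
  cos th * (cos (th + dth - phi) - cos (th - phi)) + sin th * (sin (th + dth - phi) - sin (th - phi))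
  = 2 * sin (dth/2) * sin (phi - dth/2).
Proof.
  replace (cos th * (cos (th + dth - phi) - cos (th - phi)) + sin th * (sin (th + dth - phi) - sin (th - phi)))
   with (cos (th - (th + dth - phi)) - cos (th - (th - phi))) by (rewrite !cos_minus; ring).
  replace (th - (th + dth - phi)) with ((phi - dth/2) - dth/2) by field.
  replace (th - (th - phi)) with ((phi - dth/2) + dth/2) by field.
  rewrite (cos_minus (phi - dth/2) (dth/2)), (cos_plus (phi - dth/2) (dth/2)); ring.
Qed.

Lemma main_eq (g Rr dth phi th w w' fv sv q : R)
  (Hg : 0 < g) (HR : 0 < Rr) (Hdth : 0 < dth < PI) (Hw : 0 < w) (Hw' : 0 < w')
  (A0 : fv - w / dth * (Rr * cos (th - phi) - Rr * cos (th - dth - phi)) = 0)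
  (B0 : sv - (w / dth * (Rr * sin (th - phi) - Rr * sin (th - dth - phi)) - g * dth / (2 * w)) = 0)
  (A1 : fv + - sin th * q - w' / dth * (Rr * cos (th + dth - phi) - Rr * cos (th - phi)) = 0)
  (B1 : sv + cos th * q - g * (dth / w') - (w' / dth * (Rr * sin (th + dth - phi) - Rr * sin (th - phi)) - g * dth / (2 * w')) = 0) :
  sin (phi - dth / 2) * w' - sin (phi + dth / 2) * w
    = - (g * dth ^ 2 / (4 * Rr * sin (dth / 2))) * sin th * (/ w + / w').
Proof.
  assert (Hs : 0 < sin (dth/2)) by (apply sin_gt_0; lra).
  pose proof (trigL th phi dth) as L0.
  pose proof (trigL2 th phi dth) as L1.
  assert (Hf : fv = w / dth * (Rr * cos (th - phi) - Rr * cos (th - dth - phi))) by lra.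
  assert (Hsv : sv = (w / dth * (Rr * sin (th - phi) - Rr * sin (th - dth - phi)) - g * dth / (2 * w))) by lra.
  assert (E : cos th * (fv + - sin th * q - w' / dth * (Rr * cos (th + dth - phi) - Rr * cos (th - phi)))
     + sin th * (sv + cos th * q - g * (dth / w') - (w' / dth * (Rr * sin (th + dth - phi) - Rr * sin (th - phi)) - g * dth / (2 * w'))) = 0)
   by (rewrite A1, B1; ring).
  rewrite Hf, Hsv in E.
  assert (E2 : Rr / dth * (w' * (2 * sin (dth/2) * sin (phi - dth/2)) - w * (2 * sin (dth/2) * sin (phi + dth/2)))
     = - g * dth * sin th / 2 * (/ w + / w')).
  { rewrite <- L0, <- L1. apply Rminus_diag_uniq. apply Ropp_eq_compat in E. rewrite Ropp_0 in E. rewrite <- E. field; repeat split; lra. }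
  apply Rmult_eq_reg_l with (2 * Rr * sin (dth/2) / dth).
  2: { apply Rgt_not_eq. apply Rdiv_lt_0_compat; nra. }
  transitivity (Rr / dth * (w' * (2 * sin (dth/2) * sin (phi - dth/2)) - w * (2 * sin (dth/2) * sin (phi + dth/2)))).
  { field; lra. }
  rewrite E2. field. split; lra.
Qed.

Theorem mainTheorem6 (m J g Rr dth phi : R)
  (Hm : 0 < m) (HJ : 0 < J) (Hg : 0 < g) (HR : 0 < Rr)
  (Hdth : 0 < dth < PI) (Hphi : - PI < phi <= PI)
  (h v : nat -> R * R) (theta omega I r delta : nat -> R)
  (Htraj : hybrid_trajectory m J g Rr dth h v theta omega I r delta)
  (k : nat) (Hk : (1 <= k)%nat)
  (H0 : Drho Rr phi g dth v theta omega k = (0, 0))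
  (H1 : Drho Rr phi g dth v theta omega (S k) = (0, 0)) :
  let K := g * dth ^ 2 / (4 * Rr * sin (dth / 2)) in
  let Sm := sin (phi - dth / 2) in
  let Sp := sin (phi + dth / 2) in
  Sm * omega (S k) - Sp * omega k
    = - K * sin (theta k) * (/ omega k + / omega (S k))
  /\ (phi = PI / 2 ->
      omega (S k) - omega k
        = (- (g * dth ^ 2 / (2 * Rr * sin dth))) * sin (theta k)
            * (/ omega k + / omega (S k)))
  /\ (phi = - (PI / 2) ->
      omega (S k) - omega k
        = (g * dth ^ 2 / (2 * Rr * sin dth)) * sin (theta k)
            * (/ omega k + / omega (S k))).
Proof.
  intros K Sm Sp.
  destruct (Htraj k Hk) as (Hw & Hd & _ & Hv & Hth & _ & Hdel).
  destruct (Htraj (S k) ltac:(lia)) as (Hw' & _).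
  unfold Drho, Psi, Phi in H0, H1; simpl in H0, H1.
  injection H0 as A0 B0. injection H1 as A1 B1.
  rewrite Hth in A1, B1. rewrite Hv in A1, B1; simpl in A1, B1.
  rewrite Hdel in B1.
  replace (theta k + dth - dth - phi) with (theta k - phi) in A1, B1 by ring.
  assert (Main : Sm * omega (S k) - Sp * omega k
    = - K * sin (theta k) * (/ omega k + / omega (S k))).
  { unfold Sm, Sp, K. eapply main_eq; eauto. }
  assert (Hs : 0 < sin (dth/2)) by (apply sin_gt_0; lra).
  assert (Hc : 0 < cos (dth/2)) by (apply cos_gt_0; lra).
  assert (Hsd : sin dth = 2 * sin (dth/2) * cos (dth/2)).
  { replace dth with (2 * (dth/2)) at 1 by field. apply sin_2a. }
  split; [exact Main|]. split; intro Hp; unfold Sm, Sp, K in Main; rewrite Hp in Main;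
    rewrite Hsd.
  - rewrite sin_minus, sin_plus, sin_PI2, cos_PI2 in Main.
    apply Rmult_eq_reg_l with (cos (dth/2)); [|lra].
    transitivity (- (g * dth ^ 2 / (4 * Rr * sin (dth / 2))) * sin (theta k) * (/ omega k + / omega (S k))); [lra|]. field. repeat split; lra.
  - rewrite sin_minus, sin_plus, sin_neg, cos_neg, sin_PI2, cos_PI2 in Main.
    apply Rmult_eq_reg_l with (- cos (dth/2)); [|lra].
    transitivity (- (g * dth ^ 2 / (4 * Rr * sin (dth / 2))) * sin (theta k) * (/ omega k + / omega (S k))); [lra|]. field. repeat split; lra.
Qed.
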